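(* Let $G$ be a finite transitive permutation group on a finite set $\Omega$ such that ${\bf O}_2(G)=1$ and such that the point stabiliser $G_\omega$ (for $\omega\in\Omega$) is a $2$-group. Then $\mathrm{mindeg}_\Omega(G)\ge 2|\Omega|/3$.
   Context: ${\bf O}_2(G)$ denotes the largest normal $2$-subgroup of $G$. For $g\in G$, $\mathrm{Fix}_\Omega(g)=\{\omega\in\Omega\mid \omega^g=\omega\}$ and $\mathrm{supp}_\Omega(g)=\Omega\setminus\mathrm{Fix}_\Omega(g)$. The minimal degree is $\mathrm{mindeg}_\Omega(G)=\min_{g\in G\setminus\{1\}}|\mathrm{supp}_\Omega(g)|$. *)

(* Defs.v *)
From mathcomp Require Import all_boot all_fingroup all_solvable.
Set Implicit Arguments. Unset Strict Implicit. Unset Printing Implicit Defensive.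

Definition Fix_perm (T : finType) (g : {perm T}) : {set T} := [set w | g w == w].
Definition supp_perm (T : finType) (g : {perm T}) : {set T} := ~: Fix_perm g.

(* Main.v *)
Require Import Defs.
From mathcomp Require Import all_boot all_fingroup all_solvable.
From mathcomp Require Import zify.
Set Implicit Arguments. Unset Strict Implicit. Unset Printing Implicit Defensive.
Open Scope group_scope.

Lemma inv_of_sq1 (gT : finGroupType) (t : gT) : t ^+ 2 = 1 -> t^-1 = t.
Proof. by move=> h; apply/eqP; rewrite eq_invg_mul -expg2 h. Qed.

Lemma two_elt_of_sq1 (gT : finGroupType) (t : gT) : t ^+ 2 = 1 -> 2.-elt t.
Proof.
move=> h; apply: (@pnat_dvd _ 2) => //; by rewrite order_dvdn h.
Qed.

Lemma dihedral_2group (gT : finGroupType) (t s : gT) :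
  t ^+ 2 = 1 -> s ^+ 2 = 1 -> 2.-elt (t * s) -> 2.-group <<[set t; s]>>.
Proof.
move=> t2 s2 us.
have tV := inv_of_sq1 t2; have sV := inv_of_sq1 s2.
have uJ : (t * s) ^ t = (t * s)^-1.
  by rewrite conjgE invMg tV sV !mulgA -expg2 t2 mul1g.
have nAt : <[t]> \subset 'N(<[t * s]>).
  by rewrite cycle_subG; apply/normP; rewrite -cycleJ uJ cycleV.
apply: (@pgroupS _ _ (<[t * s]> <*> <[t]>)%G).
  rewrite gen_subG subUset !sub1set; apply/andP; split.
    apply: mem_gen; rewrite in_setU; apply/orP; right. exact: (cycle_id t).
  have e : s = t * (t * s) by rewrite mulgA -expg2 t2 mul1g.
  rewrite {1}e.
  rewrite groupM //.
    by rewrite mem_gen // inE cycle_id orbT.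
  apply: mem_gen; rewrite in_setU; apply/orP; left; exact: (cycle_id (t * s)).
by rewrite /= norm_joinEr // pgroupM; apply/andP; split => //; exact: two_elt_of_sq1.
Qed.

Lemma arith3 (x y a b c f n : nat) : y + 0 = a + b -> x + 0 = y + c ->
  a = f -> b = f -> c = f -> x <= n -> 3 * f <= n.
Proof. lia. Qed.

Lemma arith_final (a b c : nat) : a + b = c -> 3 * a <= c -> 2 * c <= 3 * b.
Proof. lia. Qed.

Lemma conj_inv_u (gT : finGroupType) (t s : gT) :
  t ^+ 2 = 1 -> s ^+ 2 = 1 -> (t * s) ^ t = (t * s)^-1.
Proof.
move=> t2 s2; have tV := inv_of_sq1 t2; have sV := inv_of_sq1 s2.
by rewrite conjgE invMg tV sV !mulgA -expg2 t2 mul1g.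
Qed.

Lemma fix_conj (T : finType) (t x : {perm T}) :
  #|Fix_perm (t ^ x)| = #|Fix_perm t|.
Proof.
rewrite -[RHS](card_imset _ (@perm_inj _ x)); congr (#|pred_of_set _|); apply/setP => w.
rewrite [in LHS]inE conjgE !permM; apply/idP/idP.
  move/eqP=> h; apply/imsetP; exists (x^-1 w); last by rewrite permKV.
  by rewrite inE -{2}h permK.
case/imsetP=> v; rewrite inE => /eqP hv ->.
by rewrite permK hv.
Qed.

Lemma fix_mul (T : finType) (a b : {perm T}) (w : T) :
  w \in Fix_perm a -> w \in Fix_perm b -> w \in Fix_perm (a^-1 * b).
Proof.
rewrite !inE permM => /eqP ha /eqP hb.
have -> : a^-1 w = w by rewrite -{1}ha permK.
by rewrite hb.
Qed.

Theorem theorem1p1 (T : finType) (G : {group {perm T}}) :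
  [transitive G, on [set: T] | 'P] ->
  ('O_2(G))%g = 1%g ->
  (forall w : T, (2.-group 'C_G[w | 'P])%g) ->
  forall g : {perm T}, g \in G -> g != 1%g ->
    2 * #|[set: T]| <= 3 * #|supp_perm g|.
Proof.
move=> _ O2 stab g Gg ng1.
have cardsupp := cardsC (Fix_perm g); rewrite cardsT.
rewrite /supp_perm.
have fix2 : forall x w, x \in G -> w \in Fix_perm x -> 2.-elt x.
  move=> x w Gx; rewrite inE => /eqP hx; apply: (mem_p_elt (stab w)).
  by apply/setIP; split => //; apply/astab1P; rewrite /= apermE.
suff : 3 * #|Fix_perm g| <= #|T| by move: cardsupp; lia.
case: (set_0Vmem (Fix_perm g)) => [-> | [w0 w0F]]; first by rewrite cards0.
have g2 := fix2 _ _ Gg w0F.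
have [k ok] := p_natP g2.
have k0 : 0 < k.
  case: k ok => [|k'] ok //; by move: ng1; rewrite -order_eq1 ok.
set t := g ^+ (2 ^ k.-1).
have ot : #[t] = 2.
  rewrite /t orderXdiv ok; last by apply: dvdn_exp2l; apply: leq_pred.
  by rewrite -(prednK k0) expnS mulnK // expn_gt0.
have t2 : t ^+ 2 = 1 by rewrite -ot expg_order.
have tG : t \in G by rewrite groupX.
have nt1 : t != 1 by rewrite -order_eq1 ot.
have sF : Fix_perm g \subset Fix_perm t.
  apply/subsetP => w; rewrite !inE => /eqP hw; apply/eqP.
  by rewrite /t permX iter_fix.
suff : 3 * #|Fix_perm t| <= #|T|.
  by have := subset_leq_card sF; lia.
have [y yG ny] : exists2 y, y \in G & ~~ 2.-group <<[set t; t ^ y]>>.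
  case: (boolP [forall y in G, 2.-group <<[set t; t ^ y]>>]) => [/forall_inP h|].
    have := @Baer_Suzuki 2 _ t G tG h; rewrite O2 inE => /eqP ht.
    by rewrite ht eqxx in nt1.
  by case/forall_inPn => y yG hy; exists y.
set s := t ^ y.
have s2 : s ^+ 2 = 1 by rewrite /s -conjXg t2 conj1g.
set u := t * s.
have nu : ~~ 2.-elt u.
  by apply: contra ny; apply: dihedral_2group.
set r := u * (u.`_2)^-1.
have r2' : (2^').-elt r := p'_elt_constt 2 u.
have nr1 : r != 1.
  apply: contra nu => h; have /eqP -> : u == u.`_2 by rewrite eq_mulgV1.
  exact: p_elt_constt.
have uG : u \in G by rewrite groupM // /s groupJ.
have [i ri] : exists i, r = u ^+ i by apply/cycleP; rewrite groupM ?groupV ?cycle_id ?cycle_constt.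
have rG : r \in G by rewrite ri groupX.
have rt : r ^ t = r^-1 by rewrite ri conjXg conj_inv_u // expVgn.
have tr : forall j, t ^ (r ^+ j) = t * r ^+ (j + j).
  move=> j; rewrite conjgE mulgA (conjgC (r ^- j) t) conjVg conjXg rt expVgn invgK expgD.
  by rewrite !mulgA.
have rc : forall c, c %| 4 -> r ^+ c != 1.
  move=> c c4; apply: contra nr1 => /eqP h.
  rewrite -order_eq1; apply/eqP; apply: (@pnat_1 2) => //.
  apply: (@pnat_dvd _ 4) => //; apply: dvdn_trans c4.
  by rewrite order_dvdn h.
have dis : forall a c, c %| 4 ->
    Fix_perm (t * r ^+ a) :&: Fix_perm (t * r ^+ (a + c)) = set0.
  move=> a c c4; apply/setP => w; rewrite inE in_set0.
  apply/negP => /andP [w1 w2].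
  have := fix_mul w1 w2.
  rewrite invMg expgD -!mulgA !mulKg => wF.
  have h2 := fix2 _ _ (groupX c rG) wF.
  have h2' : (2^').-elt (r ^+ c) := p_eltX c r2'.
  have := rc c c4; rewrite -order_eq1 (pnat_1 h2 h2') //.
have hc : forall j, #|Fix_perm (t * r ^+ (j + j))| = #|Fix_perm t|.
  by move=> j; rewrite -tr fix_conj.
have cA := hc 0%N; rewrite add0n in cA.
have cB := hc 1%N; rewrite -[(1+1)%N]/2%N in cB.
have cC := hc 2%N; rewrite -[(2+2)%N]/4%N in cC.
have dAB := dis 0%N 2%N isT; rewrite add0n in dAB.
have dAC := dis 0%N 4%N isT; rewrite add0n in dAC.
have dBC := dis 2%N 2%N isT; rewrite -[(2+2)%N]/4%N in dBC.
set A := Fix_perm (t * r ^+ 0) in cA dAB dAC *.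
set B := Fix_perm (t * r ^+ 2) in cB dAB dBC *.
set C := Fix_perm (t * r ^+ 4) in cC dAC dBC *.
have e1 := cardsUI A B; have e2 := cardsUI (A :|: B) C.
rewrite setIUl dAC dBC setU0 cards0 in e2; rewrite dAB cards0 in e1.
have := subset_leq_card (subsetT (A :|: B :|: C)); rewrite cardsT.
exact: (arith3 e1 e2 cA cB cC).
Qed.
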